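(* Let $S$ be an atomic base, let $\Gamma = x_1:A_1,\dots,x_n:A_n$ be a context and let $t$ be a term with $tFV(t)\subseteq\{x_1,\dots,x_n\}$. If the term $t$ of $A$ from $\Gamma$ is I-valid (with respect to $S$), then there is a normal proof-term $s$ (with respect to $S$) such that $t\twoheadrightarrow s$ and $\Gamma\vdash s:A$ is derivable in $\mathbf{IL}_{\mathbf{at}}$.
   Context: System $\mathbf{IL}_{\mathbf{at}}$. Formulas: $A,B ::= X \mid A\to B \mid \forall X.A$, $X$ an atom. Terms: $t,s ::= x \mid c^A \mid \lambda x.t \mid ts \mid \Lambda X.t \mid tX$ ($x$ term-variable, $c^A$ a term-constant for each formula $A$, $X$ an atom). Terms/formulas up to $\alpha$-equivalence; capture-avoiding substitutions $t[x:=s]$, $t[X:=Y]$, $A[X:=B]$; $t[\vec{t_i}]$ is simultaneous substitution $t[x_1:=t_1,\dots,x_n:=t_n]$. $tFV(t)$: free term-variables; a term is closed if $tFV(t)=\emptyset$. A context is a finite set $x_1:A_1,\dots,x_n:A_n$ of distinct variables; $PFV(\Gamma)$ the propositional variables free in the $A_i$. Derivability of $\Gamma\vdash t:A$: $\Gamma,x:A\vdash x:A$; $\Gamma\vdash c^A:A$; $\to$-introduction ($\Gamma,x:A\vdash t:B$ gives $\Gamma\vdash\lambda x.t:A\to B$); $\to$-elimination ($\Gamma\vdash t:A\to B$, $\Gamma\vdash s:A$ give $\Gamma\vdash ts:B$); $\forall$-introduction ($\Gamma\vdash t:A$, $X\notin PFV(\Gamma)$ give $\Gamma\vdash \Lambda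 X.t:\forall X.A$); $\forall$-elimination ($\Gamma\vdash t:\forall X.A$ gives $\Gamma\vdash tY:A[X:=Y]$ for any atom $Y$). $\beta$-reduction: $(\lambda x.t)s\to_\beta t[x:=s]$, $(\Lambda X.t)Y\to_\beta t[X:=Y]$, closed under all term contexts. Normal = containing no such redex. $\twoheadrightarrow$ = reflexive-transitive closure of $\to_\beta$. An atomic base $S$ is a set of term-constants $c^X$ for atoms $X$; a proof-term is a term containing no term-constant other than those $c^X\in S$. qI-validity: (1) a closed term $t$ of an atom $X$ is qI-valid iff $t\twoheadrightarrow s$ for some normal $s$ with $\vdash s:X$ derivable; (2) a closed term $t$ of $B\to C$ is qI-valid iff $t\twoheadrightarrow\lambda x.u$ for some $u$ such that $u[x:=s]$ of $C$ is qI-valid for every qI-valid closed term $s$ of $B$; (3) a closed term $t$ of $\forall X.A$ is qI-valid iff $t\twoheadrightarrow\Lambda X.u$ for some $u$ such that $u[X:=Y]$ of $A[X:=Y]$ is qI-valid for every atom $Y$; (4) a term $t$ of $A$ from $x_1:A_1,\dots,x_n:A_n$ with $tFV(t)\subseteq\{x_1,\dots,x_n\}$ is qI-valid iff $t[\vec{t_i}]$ of $A$ is qI-valid for all qI-valid closed terms $t_i$ of $A_i$. A term is I-valid iff it is a proof-term and qI-valid. *)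

(* Defs.v *)
From Stdlib Require Import List Arith.
Import ListNotations.

(* Atoms are natural numbers (de Bruijn indices for propositional
   variables; indices not captured by a binder are the free atoms). *)
Inductive form : Type :=
| FVar : nat -> form
| Imp : form -> form -> form
| All : form -> form.

(* Terms: term variables are de Bruijn indices; Cst A is the constant c^A;
   TApp t Y is the application of t to the atom Y. *)
Inductive term : Type :=
| Var : nat -> term
| Cst : form -> term
| Lam : term -> term
| App : term -> term -> term
| TLam : term -> term
| TApp : term -> nat -> term.

(* --- atom renaming (all atom substitutions A[X:=Y] are renamings) --- *)
Definition upr (f : nat -> nat) : nat -> nat :=
  fun n => match n with 0 => 0 | S m => S (f m) end.

Definition scons {T} (x : T) (f : nat -> T) : nat -> T :=
  fun n => match n with 0 => x | S m => f m end.

Fixpoint fren (f : nat -> nat) (A : form) : form :=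
  match A with
  | FVar n => FVar (f n)
  | Imp A B => Imp (fren f A) (fren f B)
  | All A => All (fren (upr f) A)
  end.

(* A[X:=Y] where X is the variable bound by the outer binder *)
Definition finst (Y : nat) (A : form) : form := fren (scons Y (fun n => n)) A.

Fixpoint tren (f : nat -> nat) (t : term) : term :=
  match t with
  | Var n => Var n
  | Cst A => Cst (fren f A)
  | Lam t => Lam (tren f t)
  | App t s => App (tren f t) (tren f s)
  | TLam t => TLam (tren (upr f) t)
  | TApp t Y => TApp (tren f t) (f Y)
  end.

(* t[X:=Y] for the variable bound by an outer Lambda *)
Definition tinst (Y : nat) (t : term) : term := tren (scons Y (fun n => n)) t.

Fixpoint vren (g : nat -> nat) (t : term) : term :=
  match t with
  | Var n => Var (g n)
  | Cst A => Cst A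
  | Lam t => Lam (vren (upr g) t)
  | App t s => App (vren g t) (vren g s)
  | TLam t => TLam (vren g t)
  | TApp t Y => TApp (vren g t) Y
  end.

Definition upt (sigma : nat -> term) : nat -> term :=
  fun n => match n with 0 => Var 0 | S m => vren S (sigma m) end.

Fixpoint subst (sigma : nat -> term) (t : term) : term :=
  match t with
  | Var n => sigma n
  | Cst A => Cst A
  | Lam t => Lam (subst (upt sigma) t)
  | App t s => App (subst sigma t) (subst sigma s)
  | TLam t => TLam (subst (fun n => tren S (sigma n)) t)
  | TApp t Y => TApp (subst sigma t) Y
  end.

(* t[x:=s] for the variable bound by an outer lambda *)
Definition subst1 (s : term) (t : term) : term := subst (scons s Var) t.

Fixpoint vars_below (k : nat) (t : term) : Prop :=
  match t with
  | Var n => n < k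
  | Cst _ => True
  | Lam t => vars_below (S k) t
  | App t s => vars_below k t /\ vars_below k s
  | TLam t => vars_below k t
  | TApp t _ => vars_below k t
  end.

Definition closed (t : term) : Prop := vars_below 0 t.

(* --- derivability of Gamma |- t : A ; Gamma = x_0:A_0, x_1:A_1, ... is a
   list, Var i referring to the i-th entry --- *)
Inductive typed : list form -> term -> form -> Prop :=
| ty_var : forall G n A, nth_error G n = Some A -> typed G (Var n) A
| ty_cst : forall G A, typed G (Cst A) A
| ty_lam : forall G t A B, typed (A :: G) t B -> typed G (Lam t) (Imp A B)
| ty_app : forall G t s A B,
    typed G t (Imp A B) -> typed G s A -> typed G (App t s) B
| ty_tlam : forall G t A,
    typed (map (fren S) G) t A -> typed G (TLam t) (All A)
| ty_tapp : forall G t A Y,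
    typed G t (All A) -> typed G (TApp t Y) (finst Y A).

Inductive step : term -> term -> Prop :=
| st_beta : forall t s, step (App (Lam t) s) (subst1 s t)
| st_tbeta : forall t Y, step (TApp (TLam t) Y) (tinst Y t)
| st_lam : forall t t', step t t' -> step (Lam t) (Lam t')
| st_appl : forall t t' s, step t t' -> step (App t s) (App t' s)
| st_appr : forall t s s', step s s' -> step (App t s) (App t s')
| st_tlam : forall t t', step t t' -> step (TLam t) (TLam t')
| st_tapp : forall t t' Y, step t t' -> step (TApp t Y) (TApp t' Y).

Inductive red : term -> term -> Prop :=
| red_refl : forall t, red t t
| red_step : forall t u v, step t u -> red u v -> red t v.

Fixpoint normal (t : term) : Prop :=
  match t with
  | Var _ => True
  | Cst _ => True
  | Lam t => normal t
  | App t s =>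
      (match t with Lam _ => False | _ => True end) /\ normal t /\ normal s
  | TLam t => normal t
  | TApp t _ => (match t with TLam _ => False | _ => True end) /\ normal t
  end.

(* --- atomic bases and proof-terms ---
   An atomic base is given by the set of atoms X such that c^X is in S.
   proof_term_at base k t : under k atom binders, every constant of t is
   c^X with X a free atom whose constant belongs to the base. *)
Fixpoint proof_term_at (base : nat -> Prop) (k : nat) (t : term) : Prop :=
  match t with
  | Var _ => True
  | Cst (FVar i) => k <= i /\ base (i - k)
  | Cst _ => False
  | Lam t => proof_term_at base k t
  | App t s => proof_term_at base k t /\ proof_term_at base k s
  | TLam t => proof_term_at base (S k) t
  | TApp t _ => proof_term_at base k t
  end.

Definition proof_term (base : nat -> Prop) (t : term) : Prop :=
  proof_term_at base 0 t.

(* --- qI-validity ---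
   qIv A rho t  means  "the closed term t of (fren rho A) is qI-valid";
   the renaming parameter makes the clause for forall structurally recursive:
   (fren rho (All A))[X:=Y] = fren (scons Y rho) A. *)
Fixpoint qIv (A : form) (rho : nat -> nat) (t : term) : Prop :=
  match A with
  | FVar n => exists s, red t s /\ normal s /\ typed [] s (FVar (rho n))
  | Imp B C => exists u, red t (Lam u) /\
      forall s, closed s -> qIv B rho s -> qIv C rho (subst1 s u)
  | All B => exists u, red t (TLam u) /\
      forall Y : nat, qIv B (scons Y rho) (tinst Y u)
  end.

Definition qIvalid (A : form) (t : term) : Prop := qIv A (fun n => n) t.

Definition qIvalid_ctx (G : list form) (t : term) (A : form) : Prop :=
  forall ts : list term,
    Forall2 (fun ti Ai => closed ti /\ qIvalid Ai ti) ts G ->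
    qIvalid A (subst (fun n => nth n ts (Var n)) t).

Definition Ivalid (base : nat -> Prop) (G : list form) (t : term) (A : form)
  : Prop := proof_term base t /\ qIvalid_ctx G t A.

(* Main.v *)
Require Import Defs.
From Stdlib Require Import List Arith Lia.
Import ListNotations.

Lemma fren_ext : forall A f g, (forall n, f n = g n) -> fren f A = fren g A.
Proof.
  induction A; intros f g H; simpl; f_equal; auto.
  apply IHA. intros [|n]; simpl; auto.
Qed.

Lemma fren_comp : forall A f g, fren f (fren g A) = fren (fun n => f (g n)) A.
Proof.
  induction A; intros f g; simpl; f_equal; auto.
  rewrite IHA. apply fren_ext. intros [|n]; reflexivity.
Qed.

Lemma fren_id : forall A, fren (fun n => n) A = A.
Proof.
  induction A; simpl; f_equal; auto.
  rewrite <- IHA at 2. apply fren_ext. intros [|n]; reflexivity.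
Qed.

Lemma tren_ext : forall t f g, (forall n, f n = g n) -> tren f t = tren g t.
Proof.
  induction t as [n0|C0|t IHt|t1 IHt1 t2 IHt2|t IHt|t IHt Y0]; intros f g H; simpl; f_equal; auto using fren_ext.
  apply IHt. intros [|n]; simpl; auto.
Qed.

Lemma tren_comp : forall t f g, tren f (tren g t) = tren (fun n => f (g n)) t.
Proof.
  induction t as [n0|C0|t IHt|t1 IHt1 t2 IHt2|t IHt|t IHt Y0]; intros f g; simpl; f_equal; auto using fren_comp.
  rewrite IHt. apply tren_ext. intros [|n]; reflexivity.
Qed.

Lemma tren_id : forall t, tren (fun n => n) t = t.
Proof.
  induction t; simpl; f_equal; auto using fren_id.
  rewrite <- IHt at 2. apply tren_ext. intros [|n]; reflexivity.
Qed.

Lemma vren_ext : forall t f g, (forall n, f n = g n) -> vren f t = vren g t.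
Proof.
  induction t as [n0|C0|t IHt|t1 IHt1 t2 IHt2|t IHt|t IHt Y0]; intros f g H; simpl; f_equal; auto.
  apply IHt. intros [|n]; simpl; auto.
Qed.

Lemma vren_comp : forall t f g, vren f (vren g t) = vren (fun n => f (g n)) t.
Proof.
  induction t as [n0|C0|t IHt|t1 IHt1 t2 IHt2|t IHt|t IHt Y0]; intros f g; simpl; f_equal; auto.
  rewrite IHt. apply vren_ext. intros [|n]; reflexivity.
Qed.

Lemma vren_id : forall t, vren (fun n => n) t = t.
Proof.
  induction t; simpl; f_equal; auto.
  rewrite <- IHt at 2. apply vren_ext. intros [|n]; reflexivity.
Qed.

Lemma vren_tren : forall t g f, vren g (tren f t) = tren f (vren g t).
Proof. induction t as [n0|C0|t IHt|t1 IHt1 t2 IHt2|t IHt|t IHt Y0]; intros g f; simpl; f_equal; auto. Qed.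

Lemma subst_ext : forall t s1 s2, (forall n, s1 n = s2 n) -> subst s1 t = subst s2 t.
Proof.
  induction t; intros s1 s2 H; simpl; f_equal; auto.
  - apply IHt. intros [|n]; simpl; f_equal; auto.
  - apply IHt. intros n; simpl; f_equal; auto.
Qed.

Lemma subst_vren : forall t s g, subst s (vren g t) = subst (fun n => s (g n)) t.
Proof.
  induction t; intros s g; simpl; f_equal; auto.
  all: rewrite IHt; apply subst_ext; intros [|n]; reflexivity.
Qed.

Lemma vren_subst : forall t s g, vren g (subst s t) = subst (fun n => vren g (s n)) t.
Proof.
  induction t; intros s g; simpl; f_equal; auto.
  - rewrite IHt. apply subst_ext. intros [|n]; simpl; auto.
    unfold upt. rewrite !vren_comp. apply vren_ext. reflexivity.
  - rewrite IHt. apply subst_ext. intros n. apply vren_tren.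
Qed.

Lemma tren_subst : forall t s f, tren f (subst s t) = subst (fun n => tren f (s n)) (tren f t).
Proof.
  induction t as [n0|C0|t IHt|t1 IHt1 t2 IHt2|t IHt|t IHt Y0]; intros s f; simpl; f_equal; auto.
  - rewrite IHt. apply subst_ext. intros [|n]; simpl; auto.
    symmetry; apply vren_tren.
  - rewrite IHt. apply subst_ext. intros n. rewrite !tren_comp. apply tren_ext. reflexivity.
Qed.

Lemma subst_var : forall t, subst Var t = t.
Proof.
  induction t; simpl; f_equal; auto.
  - rewrite <- IHt at 2. apply subst_ext. intros [|n]; reflexivity.
Qed.

Lemma subst_subst : forall t s1 s2, subst s2 (subst s1 t) = subst (fun n => subst s2 (s1 n)) t.
Proof.
  induction t; intros s1 s2; simpl; f_equal; auto.
  - rewrite IHt. apply subst_ext. intros [|n]; simpl; auto.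
    rewrite subst_vren, vren_subst. apply subst_ext. intros m; reflexivity.
  - rewrite IHt. apply subst_ext. intros n. rewrite tren_subst. reflexivity.
Qed.

Lemma subst1_vren_S : forall s n, subst1 s (vren S n) = n.
Proof.
  intros. unfold subst1. rewrite subst_vren. apply subst_var.
Qed.

Lemma vren_subst1 : forall g s t, vren g (subst1 s t) = subst1 (vren g s) (vren (upr g) t).
Proof.
  intros. unfold subst1. rewrite vren_subst, subst_vren. apply subst_ext. intros [|n]; reflexivity.
Qed.

Lemma tren_subst1 : forall f s t, tren f (subst1 s t) = subst1 (tren f s) (tren f t).
Proof.
  intros. unfold subst1. rewrite tren_subst. apply subst_ext. intros [|n]; reflexivity.
Qed.

Lemma vren_tinst : forall g Y t, vren g (tinst Y t) = tinst Y (vren g t).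
Proof. intros. unfold tinst. apply vren_tren. Qed.

Lemma tren_tinst : forall f Y t, tren f (tinst Y t) = tinst (f Y) (tren (upr f) t).
Proof.
  intros. unfold tinst. rewrite !tren_comp. apply tren_ext. intros [|n]; reflexivity.
Qed.

Lemma fren_finst : forall f Y A, fren f (finst Y A) = finst (f Y) (fren (upr f) A).
Proof.
  intros. unfold finst. rewrite !fren_comp. apply fren_ext. intros [|n]; reflexivity.
Qed.

Lemma step_vren : forall t t', step t t' -> forall g, step (vren g t) (vren g t').
Proof.
  induction 1; intros g; simpl; try (constructor; auto; fail).
  - rewrite vren_subst1. constructor.
  - rewrite vren_tinst. constructor.
Qed.

Lemma step_tren : forall t t', step t t' -> forall f, step (tren f t) (tren f t').
Proof.
  induction 1; intros f; simpl; try (constructor; auto; fail).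
  - rewrite tren_subst1. constructor.
  - rewrite tren_tinst. constructor.
Qed.

Lemma step_vren_inv : forall t g w, step (vren g t) w -> exists u, w = vren g u /\ step t u.
Proof.
  induction t as [n|C|t IH|t1 IH1 t2 IH2|t IH|t IH Y]; intros g w H; simpl in H; inversion H; subst.
  - destruct (IH _ _ H1) as [u0 [-> Hu0]]. exists (Lam u0); split; [reflexivity| constructor; auto].
  - destruct t1 as [| |b| | |]; simpl in H1; try discriminate. injection H1 as ->.
    exists (subst1 t2 b). split; [|constructor]. rewrite vren_subst1. reflexivity.
  - destruct (IH1 _ _ H3) as [u0 [-> Hu0]]. exists (App u0 t2); split; [reflexivity| constructor; auto].
  - destruct (IH2 _ _ H3) as [u0 [-> Hu0]]. exists (App t1 u0); split; [reflexivity| constructor; auto].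
  - destruct (IH _ _ H1) as [u0 [-> Hu0]]. exists (TLam u0); split; [reflexivity| constructor; auto].
  - destruct t as [| | | |b|]; simpl in H1; try discriminate. injection H1 as ->.
    exists (tinst Y b). split; [|constructor]. rewrite vren_tinst. reflexivity.
  - destruct (IH _ _ H3) as [u0 [-> Hu0]]. exists (TApp u0 Y); split; [reflexivity| constructor; auto].
Qed.

Lemma step_tren_inv : forall t f w, step (tren f t) w -> exists u, w = tren f u /\ step t u.
Proof.
  induction t as [n|C|t IH|t1 IH1 t2 IH2|t IH|t IH Y]; intros f w H; simpl in H; inversion H; subst.
  - destruct (IH _ _ H1) as [u0 [-> Hu0]]. exists (Lam u0); split; [reflexivity| constructor; auto].
  - destruct t1 as [| |b| | |]; simpl in H1; try discriminate. injection H1 as ->.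
    exists (subst1 t2 b). split; [|constructor]. rewrite tren_subst1. reflexivity.
  - destruct (IH1 _ _ H3) as [u0 [-> Hu0]]. exists (App u0 t2); split; [reflexivity| constructor; auto].
  - destruct (IH2 _ _ H3) as [u0 [-> Hu0]]. exists (App t1 u0); split; [reflexivity| constructor; auto].
  - destruct (IH _ _ H1) as [u0 [-> Hu0]]. exists (TLam u0); split; [reflexivity| constructor; auto].
  - destruct t as [| | | |b|]; simpl in H1; try discriminate. injection H1 as ->.
    exists (tinst Y b). split; [|constructor]. rewrite tren_tinst. reflexivity.
  - destruct (IH _ _ H3) as [u0 [-> Hu0]]. exists (TApp u0 Y); split; [reflexivity| constructor; auto].
Qed.

Lemma red_trans : forall a b c, red a b -> red b c -> red a c.
Proof. induction 1; intros; auto. econstructor; eauto. Qed.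

Lemma red_one : forall a b, step a b -> red a b.
Proof. intros. econstructor; eauto. constructor. Qed.

Lemma red_cong : forall (F : term -> term), (forall a b, step a b -> step (F a) (F b)) ->
  forall a b, red a b -> red (F a) (F b).
Proof. intros F HF; induction 1; [constructor| econstructor; eauto]. Qed.

Lemma red_lam : forall a b, red a b -> red (Lam a) (Lam b).
Proof. apply (red_cong Lam). intros; constructor; auto. Qed.
Lemma red_tlam : forall a b, red a b -> red (TLam a) (TLam b).
Proof. apply (red_cong TLam). intros; constructor; auto. Qed.
Lemma red_appl : forall s a b, red a b -> red (App a s) (App b s).
Proof. intros s; apply (red_cong (fun x => App x s)). intros; constructor; auto. Qed.
Lemma red_appr : forall s a b, red a b -> red (App s a) (App s b).
Proof. intros s; apply (red_cong (fun x => App s x)). intros; constructor; auto. Qed.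
Lemma red_tapp : forall Y a b, red a b -> red (TApp a Y) (TApp b Y).
Proof. intros Y; apply (red_cong (fun x => TApp x Y)). intros; constructor; auto. Qed.
Lemma red_vren : forall g a b, red a b -> red (vren g a) (vren g b).
Proof. intros g; apply (red_cong (vren g)). intros; apply step_vren; auto. Qed.
Lemma red_tren : forall f a b, red a b -> red (tren f a) (tren f b).
Proof. intros f; apply (red_cong (tren f)). intros; apply step_tren; auto. Qed.

Lemma red_lam_inv : forall a s, red (Lam a) s -> exists b, s = Lam b /\ red a b.
Proof.
  intros a s H. remember (Lam a) as x eqn:Hx. revert a Hx.
  induction H; intros a Hx; subst.
  - exists a; split; auto; constructor.
  - inversion H; subst. destruct (IHred t' eq_refl) as [b [-> Hb]].
    exists b; split; auto. econstructor; eauto.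
Qed.

Lemma normal_vren : forall t g, normal (vren g t) <-> normal t.
Proof.
  induction t as [n|C|t IH|t1 IH1 t2 IH2|t IH|t IH Y]; intros g; simpl; try tauto; try apply IH.
  - rewrite IH1, IH2. destruct t1; simpl; tauto.
  - rewrite IH. destruct t; simpl; tauto.
Qed.

Lemma normal_tren : forall t f, normal (tren f t) <-> normal t.
Proof.
  induction t as [n|C|t IH|t1 IH1 t2 IH2|t IH|t IH Y]; intros f; simpl; try tauto; try apply IH.
  - rewrite IH1, IH2. destruct t1; simpl; tauto.
  - rewrite IH. destruct t; simpl; tauto.
Qed.

Lemma vars_below_vren : forall t k k' g, vars_below k t -> (forall n, n < k -> g n < k') ->
  vars_below k' (vren g t).
Proof.
  induction t as [n|C|t IH|t1 IH1 t2 IH2|t IH|t IH Y]; intros k k' g H Hg; simpl in *; auto.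
  - apply (IH (S k)); auto. intros [|n] Hn; simpl; [lia|]. specialize (Hg n). lia.
  - destruct H; split; eauto.
  - eauto.
  - eauto.
Qed.

Lemma vars_below_tren : forall t k f, vars_below k (tren f t) <-> vars_below k t.
Proof.
  induction t as [n|C|t IH|t1 IH1 t2 IH2|t IH|t IH Y]; intros k f; simpl in *; try tauto; try apply IH.
  rewrite IH1, IH2; tauto.
Qed.

Lemma vars_below_subst : forall t k k' s, vars_below k t -> (forall n, n < k -> vars_below k' (s n)) ->
  vars_below k' (subst s t).
Proof.
  induction t as [n|C|t IH|t1 IH1 t2 IH2|t IH|t IH Y]; intros k k' s H Hs; simpl in *; auto.
  - apply (IH (S k)); auto. intros [|n] Hn; simpl; [lia|].
    apply vars_below_vren with k'. apply Hs; lia. intros; lia.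
  - destruct H; split; eauto.
  - apply (IH k); auto. intros n Hn. apply vars_below_tren. auto.
  - eauto.
Qed.

Lemma vars_below_mono : forall t k k', vars_below k t -> k <= k' -> vars_below k' t.
Proof.
  induction t as [n|C|t IH|t1 IH1 t2 IH2|t IH|t IH Y]; intros k k' H Hk; simpl in *; auto.
  - lia.
  - apply (IH (S k)); auto; lia.
  - destruct H; split; eauto.
  - eauto.
  - eauto.
Qed.

Lemma step_vars_below : forall t t', step t t' -> forall k, vars_below k t -> vars_below k t'.
Proof.
  induction 1; intros k Hk; simpl in *; try tauto; auto.
  - destruct Hk as [H1 H2]. unfold subst1. apply (vars_below_subst _ (S k)); auto.
    intros [|n] Hn; simpl; auto. lia.
  - unfold tinst. apply vars_below_tren. auto.
  - destruct Hk; split; eauto.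
  - destruct Hk; split; eauto.
Qed.

Lemma red_vars_below : forall t t', red t t' -> forall k, vars_below k t -> vars_below k t'.
Proof. induction 1; intros; eauto using step_vars_below. Qed.

Lemma subst_ext_vars : forall t k s1 s2, vars_below k t -> (forall n, n < k -> s1 n = s2 n) ->
  subst s1 t = subst s2 t.
Proof.
  induction t as [n|C|t IH|t1 IH1 t2 IH2|t IH|t IH Y]; intros k s1 s2 H Hs; simpl in *; f_equal; auto.
  - apply (IH (S k)); auto. intros [|n] Hn; simpl; auto. f_equal. apply Hs. lia.
  - destruct H; eauto.
  - destruct H; eauto.
  - apply (IH k); auto. intros n Hn; f_equal; auto.
  - eauto.
Qed.

Lemma pt_vren : forall base t k g, proof_term_at base k t -> proof_term_at base k (vren g t).
Proof.
  induction t as [n|C|t IH|t1 IH1 t2 IH2|t IH|t IH Y]; intros k g H; simpl in *; auto.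
  - destruct H; split; eauto.
Qed.

Lemma pt_tren : forall base t k k' f, proof_term_at base k t ->
  (forall i, k <= i -> k' <= f i /\ f i - k' = i - k) -> proof_term_at base k' (tren f t).
Proof.
  induction t as [n|C|t IH|t1 IH1 t2 IH2|t IH|t IH Y]; intros k k' f H Hf; simpl in *; auto.
  - destruct C; simpl in *; try tauto. destruct H as [H1 H2].
    destruct (Hf n H1) as [H3 H4]. split; auto. rewrite H4; auto.
  - eauto.
  - destruct H; split; eauto.
  - apply (IH (S k)); auto. intros [|i] Hi; [lia|]. simpl.
    destruct (Hf i) as [H1 H2]; lia.
  - eauto.
Qed.

Lemma pt_subst : forall base t k s, proof_term_at base k t ->
  (forall n, proof_term_at base k (s n)) -> proof_term_at base k (subst s t).
Proof.
  induction t as [n|C|t IH|t1 IH1 t2 IH2|t IH|t IH Y]; intros k s H Hs; simpl in *; auto.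
  - apply IH; auto. intros [|n]; simpl; auto. apply pt_vren; auto.
  - destruct H; split; eauto.
  - apply IH; auto. intros n. apply (pt_tren _ _ k); auto. intros; lia.
Qed.

Lemma step_pt : forall base t t', step t t' -> forall k, proof_term_at base k t -> proof_term_at base k t'.
Proof.
  induction 1; intros k Hk; simpl in *; try tauto; auto.
  - destruct Hk as [H1 H2]. unfold subst1. apply pt_subst; auto. intros [|n]; simpl; auto.
  - unfold tinst. apply (pt_tren _ _ (S k)); auto. intros [|i] Hi; [lia|]. simpl. lia.
  - destruct Hk; split; eauto.
  - destruct Hk; split; eauto.
Qed.

Lemma red_pt : forall base t t', red t t' -> forall k, proof_term_at base k t -> proof_term_at base k t'.
Proof. induction 1; intros; eauto using step_pt. Qed.

Lemma map_fren_S_comm : forall f G,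
  map (fren (upr f)) (map (fren S) G) = map (fren S) (map (fren f) G).
Proof.
  intros. rewrite !map_map. apply map_ext. intros a. rewrite !fren_comp. apply fren_ext. reflexivity.
Qed.

Lemma typed_tren : forall G t A, typed G t A -> forall f, typed (map (fren f) G) (tren f t) (fren f A).
Proof.
  induction 1; intros f; simpl.
  - constructor. apply map_nth_error. auto.
  - constructor.
  - constructor. apply (IHtyped f).
  - econstructor; [apply (IHtyped1 f)|apply IHtyped2].
  - constructor. rewrite <- map_fren_S_comm. apply IHtyped.
  - rewrite fren_finst. constructor. apply (IHtyped f).
Qed.

Lemma typed_vren_inv : forall t G' g T, typed G' (vren g t) T -> forall G,
  (forall i, nth_error G' (g i) = nth_error G i) -> typed G t T.
Proof.
  induction t as [n|C|t IH|t1 IH1 t2 IH2|t IH|t IH Y]; intros G' g T H G HG; simpl in H; inversion H; subst.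
  - constructor. rewrite <- HG. auto.
  - constructor.
  - constructor. eapply IH; eauto. intros [|i]; simpl; auto.
  - econstructor; eauto.
  - constructor. eapply IH; eauto. intros i. rewrite !nth_error_map, HG. reflexivity.
  - constructor. eapply IH; eauto.
Qed.

Inductive spine : term -> Prop :=
| sp_var : forall n, spine (Var n)
| sp_app : forall p a, spine p -> spine (App p a)
| sp_tapp : forall p Y, spine p -> spine (TApp p Y).

Lemma spine_unique : forall p, spine p -> forall G T1 T2, typed G p T1 -> typed G p T2 -> T1 = T2.
Proof.
  induction 1; intros G T1 T2 H1 H2; inversion H1; inversion H2; subst.
  - congruence.
  - specialize (IHspine _ _ _ H5 H11). congruence.
  - specialize (IHspine _ _ _ H6 H11). congruence.
Qed.

Lemma spine_vren : forall p g, spine p -> spine (vren g p).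
Proof. induction 1; simpl; constructor; auto. Qed.
Lemma spine_tren : forall p f, spine p -> spine (tren f p).
Proof. induction 1; simpl; constructor; auto. Qed.
Lemma spine_vren_inv : forall p g, spine (vren g p) -> spine p.
Proof.
  induction p; intros g H; simpl in H; inversion H; subst; constructor; eauto.
Qed.
Lemma spine_tren_inv : forall p f, spine (tren f p) -> spine p.
Proof.
  induction p as [n0|C0|t IHt|t1 IHt1 t2 IHt2|t IHt|t IHt Y0]; intros f H; simpl in H; inversion H; subst; constructor; eauto.
Qed.

Lemma fren_pred_S : forall A, fren pred (fren S A) = A.
Proof. intros. rewrite fren_comp. rewrite <- (fren_id A) at 2. apply fren_ext. reflexivity. Qed.
Lemma tren_pred_S : forall t, tren pred (tren S t) = t.
Proof. intros. rewrite tren_comp. rewrite <- (tren_id t) at 2. apply tren_ext. reflexivity. Qed.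
Lemma map_fren_pred_S : forall G, map (fren pred) (map (fren S) G) = G.
Proof. intros. rewrite map_map. rewrite <- (map_id G) at 2. apply map_ext. apply fren_pred_S. Qed.

Lemma typed_tapp_shift_inv : forall G p T, spine p ->
  typed (map (fren S) G) (TApp (tren S p) 0) T -> typed G p (All T).
Proof.
  intros G p T Hsp H. inversion H; subst.
  rename A into T2. match goal with Hx : typed _ (tren S p) _ |- _ => rename Hx into H3 end.
  pose proof (typed_tren _ _ _ H3 pred) as H4.
  rewrite map_fren_pred_S, tren_pred_S in H4.
  pose proof (typed_tren _ _ _ H4 S) as H5.
  pose proof (spine_unique _ (spine_tren _ S Hsp) _ _ _ H3 H5) as E.
  simpl in H4, E. injection E as E.
  replace (finst 0 T2) with (fren (upr pred) T2); auto.
  rewrite E. unfold finst. rewrite !fren_comp. apply fren_ext. intros [|n]; reflexivity.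
Qed.

Lemma typed_app_shift_inv : forall G A p T,
  typed (A :: G) (App (vren S p) (Var 0)) T -> typed G p (Imp A T).
Proof.
  intros G A p T H. inversion H; subst.
  match goal with Hx : typed _ (Var 0) _ |- _ => inversion Hx; subst end.
  match goal with Hx : nth_error _ 0 = _ |- _ => simpl in Hx; injection Hx as -> end.
  eapply typed_vren_inv; [eassumption|]. intros i; reflexivity.
Qed.

Lemma qIv_red_back : forall A r t t', red t t' -> qIv A r t' -> qIv A r t.
Proof.
  destruct A; simpl; intros r t t' H [x [Hx Hy]]; exists x; split; eauto using red_trans.
Qed.

Fixpoint eta (E : form) (n : term) : term :=
  match E with
  | FVar _ => n
  | Imp _ E' => Lam (eta E' (App (vren S n) (Var 0)))
  | All E' => TLam (eta E' (TApp (tren S n) 0))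
  end.

Lemma vren_eta : forall E n g, vren g (eta E n) = eta E (vren g n).
Proof.
  induction E as [x|E1 IHE1 E2 IHE2|E IHE]; intros n g; simpl; auto.
  - rewrite IHE2. simpl. rewrite !vren_comp. reflexivity.
  - rewrite IHE. simpl. rewrite vren_tren. reflexivity.
Qed.

Lemma tren_eta : forall E n f, tren f (eta E n) = eta E (tren f n).
Proof.
  induction E as [x|E1 IHE1 E2 IHE2|E IHE]; intros n f; simpl; auto.
  - rewrite IHE2. simpl. rewrite vren_tren. reflexivity.
  - rewrite IHE. simpl. rewrite !tren_comp. reflexivity.
Qed.

Lemma subst_eta : forall E n s, subst s (eta E n) = eta E (subst s n).
Proof.
  induction E as [x|E1 IHE1 E2 IHE2|E IHE]; intros n s; simpl; auto.
  - rewrite IHE2. simpl. rewrite subst_vren, vren_subst. reflexivity.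
  - rewrite IHE. simpl. rewrite tren_subst. reflexivity.
Qed.

Lemma red_eta : forall E n n', red n n' -> red (eta E n) (eta E n').
Proof.
  induction E as [x|E1 IHE1 E2 IHE2|E IHE]; intros n n' H; simpl; auto.
  - apply red_lam, IHE2, red_appl, red_vren, H.
  - apply red_tlam, IHE, red_tapp, red_tren, H.
Qed.

Lemma vars_below_eta : forall E n k, vars_below k n -> vars_below k (eta E n).
Proof.
  induction E as [x|E1 IHE1 E2 IHE2|E IHE]; intros n k H; simpl; auto.
  - apply IHE2. simpl. split; [|lia]. apply vars_below_vren with k; auto. intros; lia.
  - apply IHE. simpl. apply vars_below_tren. auto.
Qed.

Definition sh (r : nat -> nat) : nat -> nat := fun n => S (r n).

Inductive R (B0 : form) : nat -> (nat -> nat) -> term -> term -> Prop :=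
| R_var : forall d r n, n < d -> R B0 d r (Var n) (Var n)
| R_cst : forall d r A, R B0 d r (Cst A) (Cst A)
| R_lam : forall d r u w, R B0 (S d) r u w -> R B0 d r (Lam u) (Lam w)
| R_app : forall d r u1 w1 u2 w2, R B0 d r u1 w1 -> R B0 d r u2 w2 ->
    R B0 d r (App u1 u2) (App w1 w2)
| R_tlam : forall d r u w, R B0 d (sh r) u w -> R B0 d r (TLam u) (TLam w)
| R_tapp : forall d r u w Y, R B0 d r u w -> R B0 d r (TApp u Y) (TApp w Y)
| R_x : forall d r p w, XF B0 d r p w -> R B0 d r p w
with XF (B0 : form) : nat -> (nat -> nat) -> term -> term -> Prop :=
| XF_neu : forall d r p n, N B0 d r p n -> XF B0 d r p n
| XF_lam : forall d r p w, XF B0 (S d) r (App (vren S p) (Var 0)) w -> XF B0 d r p (Lam w)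
| XF_tlam : forall d r p w, XF B0 d (sh r) (TApp (tren S p) 0) w -> XF B0 d r p (TLam w)
with N (B0 : form) : nat -> (nat -> nat) -> term -> term -> Prop :=
| N_var : forall d r, N B0 d r (Var d) (Cst (fren r B0))
| N_app : forall d r p n a b, N B0 d r p n -> R B0 d r a b -> N B0 d r (App p a) (App n b)
| N_tapp : forall d r p n Y, N B0 d r p n -> N B0 d r (TApp p Y) (TApp n Y).

Scheme R_mut := Induction for R Sort Prop
with XF_mut := Induction for XF Sort Prop
with N_mut := Induction for N Sort Prop.
Combined Scheme RXN_mut from R_mut, XF_mut, N_mut.

Lemma N_spine : forall B0 d r p n, N B0 d r p n -> spine p.
Proof. induction 1; constructor; auto. Qed.

Lemma XF_spine : forall B0 d r p w, XF B0 d r p w -> spine p.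
Proof.
  induction 1.
  - eapply N_spine; eauto.
  - inversion IHXF; subst. eapply spine_vren_inv; eauto.
  - inversion IHXF; subst. eapply spine_tren_inv; eauto.
Qed.

Lemma RXN_tren : forall B0,
  (forall d r u w, R B0 d r u w -> forall f r', (forall n, r' n = f (r n)) ->
      R B0 d r' (tren f u) (tren f w)) /\
  (forall d r u w, XF B0 d r u w -> forall f r', (forall n, r' n = f (r n)) ->
      XF B0 d r' (tren f u) (tren f w)) /\
  (forall d r u w, N B0 d r u w -> forall f r', (forall n, r' n = f (r n)) ->
      N B0 d r' (tren f u) (tren f w)).
Proof.
  intros B0. apply RXN_mut; intros; simpl.
  - constructor; auto.
  - constructor.
  - constructor; auto.
  - constructor; auto.
  - constructor. apply H. intros n; unfold sh; simpl; rewrite H0; reflexivity.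
  - constructor; auto.
  - apply R_x; auto.
  - apply XF_neu; auto.
  - apply XF_lam. specialize (H f r' H0). simpl in H. rewrite <- vren_tren in H. exact H.
  - apply XF_tlam. specialize (H (upr f) (sh r')). simpl in H.
    replace (tren S (tren f p)) with (tren (upr f) (tren S p)).
    + apply H. intros n; unfold sh; rewrite H0; reflexivity.
    + rewrite !tren_comp. reflexivity.
  - rewrite fren_comp. rewrite (fren_ext B0 (fun n => f (r n)) r').
    + constructor.
    + intros; auto.
  - constructor; auto.
  - constructor; auto.
Qed.

Lemma RXN_vren : forall B0,
  (forall d1 r u w, R B0 d1 r u w -> forall g d2, (forall n, n < d1 -> g n < d2) -> g d1 = d2 ->
      R B0 d2 r (vren g u) (vren g w)) /\
  (forall d1 r u w, XF B0 d1 r u w -> forall g d2, (forall n, n < d1 -> g n < d2) -> g d1 = d2 ->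
      XF B0 d2 r (vren g u) (vren g w)) /\
  (forall d1 r u w, N B0 d1 r u w -> forall g d2, (forall n, n < d1 -> g n < d2) -> g d1 = d2 ->
      N B0 d2 r (vren g u) (vren g w)).
Proof.
  intros B0. apply RXN_mut; intros; simpl.
  - constructor; auto.
  - constructor.
  - constructor. apply H.
    + intros [|n] Hn; simpl; [lia|]. specialize (H0 n). lia.
    + simpl; lia.
  - constructor; eauto.
  - constructor; auto.
  - constructor; auto.
  - apply R_x; auto.
  - apply XF_neu; auto.
  - apply XF_lam. specialize (H (upr g) (S d2)). simpl in H.
    replace (vren S (vren g p)) with (vren (upr g) (vren S p)).
    + apply H; auto. intros [|n] Hn; simpl; [lia|]. specialize (H0 n). lia.
    + rewrite !vren_comp. reflexivity.
  - apply XF_tlam. specialize (H g d2 H0 H1). simpl in H. rewrite vren_tren in H. exact H.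
  - rewrite H0. constructor.
  - constructor; eauto.
  - constructor; eauto.
Qed.

Lemma upt_rel : forall B0 d1 d2 r su sw,
  (forall n, n < d1 -> R B0 d2 r (su n) (sw n)) ->
  forall n, n < S d1 -> R B0 (S d2) r (upt su n) (upt sw n).
Proof.
  intros B0 d1 d2 r su sw H [|n] Hn; simpl.
  - constructor; lia.
  - apply (proj1 (RXN_vren B0)) with d2; auto. apply H; lia. intros; lia.
Qed.

Lemma RXN_subst : forall B0,
  (forall d1 r u w, R B0 d1 r u w -> forall su sw d2,
      (forall n, n < d1 -> R B0 d2 r (su n) (sw n)) -> su d1 = Var d2 ->
      R B0 d2 r (subst su u) (subst sw w)) /\
  (forall d1 r u w, XF B0 d1 r u w -> forall su sw d2,
      (forall n, n < d1 -> R B0 d2 r (su n) (sw n)) -> su d1 = Var d2 ->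
      XF B0 d2 r (subst su u) (subst sw w)) /\
  (forall d1 r u w, N B0 d1 r u w -> forall su sw d2,
      (forall n, n < d1 -> R B0 d2 r (su n) (sw n)) -> su d1 = Var d2 ->
      N B0 d2 r (subst su u) (subst sw w)).
Proof.
  intros B0. apply RXN_mut; intros; simpl.
  - auto.
  - constructor.
  - constructor. apply H.
    + apply upt_rel; auto.
    + simpl. rewrite H1. reflexivity.
  - constructor; eauto.
  - constructor. apply H.
    + intros n Hn. apply (proj1 (RXN_tren B0)) with r; auto.
    + rewrite H1. reflexivity.
  - constructor; auto.
  - apply R_x; auto.
  - apply XF_neu; auto.
  - apply XF_lam. specialize (H (upt su) (upt sw) (S d2)). simpl in H.
    rewrite subst_vren in H. rewrite vren_subst. apply H.
    + apply upt_rel; auto.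
    + simpl. rewrite H1. reflexivity.
  - apply XF_tlam. specialize (H (fun n => tren S (su n)) (fun n => tren S (sw n)) d2). simpl in H.
    rewrite tren_subst. apply H.
    + intros n Hn. apply (proj1 (RXN_tren B0)) with r; auto.
    + rewrite H1. reflexivity.
  - rewrite H0. constructor.
  - constructor; eauto.
  - constructor; eauto.
Qed.

Lemma eta_XF : forall B0 E d r p n, N B0 d r p n -> XF B0 d r p (eta E n).
Proof.
  intros B0 E. induction E as [x|E1 IHE1 E2 IHE2|E IHE]; intros d r p n H; simpl.
  - apply XF_neu; auto.
  - apply XF_lam. apply IHE2. constructor.
    + apply (proj2 (proj2 (RXN_vren B0))) with d; auto. intros; lia.
    + constructor; lia.
  - apply XF_tlam. apply IHE. constructor.
    apply (proj2 (proj2 (RXN_tren B0))) with r; auto.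
Qed.

Lemma R_init : forall B0 E u d r s, vars_below (S d) u ->
  (forall n, n < d -> s n = Var n) -> s d = eta E (Cst (fren r B0)) ->
  R B0 d r u (subst s u).
Proof.
  intros B0 E u. induction u as [n|C|t IH|t1 IH1 t2 IH2|t IH|t IH Y]; intros d r s Hv Hs Hd; simpl in *.
  - destruct (Nat.eq_dec n d) as [->|Hne].
    + rewrite Hd. apply R_x. apply eta_XF. constructor.
    + rewrite Hs by lia. constructor; lia.
  - constructor.
  - constructor. apply IH; auto.
    + intros [|n] Hn; simpl; auto. rewrite Hs by lia. reflexivity.
    + simpl. rewrite Hd, vren_eta. reflexivity.
  - destruct Hv. constructor; auto.
  - constructor. apply IH; auto.
    + intros n Hn. rewrite Hs by lia. reflexivity.
    + rewrite Hd, tren_eta. simpl. rewrite fren_comp. reflexivity.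
  - constructor; auto.
Qed.

Definition ostep u u' := u' = u \/ step u u'.

Ltac use_ih IH := match goal with Hx : step _ _ |- _ => destruct (IH _ Hx) as [u' [[->|Hs] Hr]] end.
Ltac use_ihq IH := match goal with Hx : step _ _ |- _ => destruct (IH _ Hx) as [q [[->|Hs] Hq]] end.

Lemma spine_not_lam : forall p t, spine p -> p <> Lam t.
Proof. intros p t H; inversion H; discriminate. Qed.
Lemma spine_not_tlam : forall p t, spine p -> p <> TLam t.
Proof. intros p t H; inversion H; discriminate. Qed.

Lemma subst_scons_vren : forall a p, subst (scons a Var) (vren S p) = p.
Proof. intros. apply subst1_vren_S. Qed.

Lemma RXN_sim : forall B0,
  (forall d r u w, R B0 d r u w -> forall w', step w w' ->
      exists u', ostep u u' /\ R B0 d r u' w') /\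
  (forall d r u w, XF B0 d r u w -> forall w', step w w' ->
      exists u', ostep u u' /\ XF B0 d r u' w') /\
  (forall d r u w, N B0 d r u w -> forall w', step w w' ->
      exists u', ostep u u' /\ N B0 d r u' w').
Proof.
  intros B0. apply RXN_mut; intros.
  - inversion H.
  - inversion H.
  - inversion H0; subst. use_ih H.
    + exists (Lam u); split; [left; auto| constructor; auto].
    + exists (Lam u'); split; [right; constructor; auto| constructor; auto].
  - rename r0 into HR1, r1 into HR2.
    inversion H1; subst.
    +
      inversion HR1; subst.
      * exists (subst1 u2 u). split; [right; constructor|].
        apply (proj1 (RXN_subst B0)) with (S d); auto.
        intros [|n] Hn; simpl; auto. constructor; lia.
      * match goal with Hx : XF _ _ _ _ (Lam _) |- _ => inversion Hx; subst end.
        { match goal with Hx : N _ _ _ _ (Lam _) |- _ => inversion Hx end. }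
        exists (App u1 u2). split; [left; auto|]. apply R_x.
        match goal with Hx : XF _ (S d) _ _ _ |- _ =>
          pose proof ((proj1 (proj2 (RXN_subst B0))) _ _ _ _ Hx (scons u2 Var) (scons w2 Var) d) as Hy end.
        simpl in Hy. rewrite subst_scons_vren in Hy. apply Hy; auto.
        intros [|n] Hn; simpl; auto. constructor; lia.
    + use_ih H.
      * exists (App u1 u2); split; [left; auto| constructor; auto].
      * exists (App u' u2); split; [right; constructor; auto| constructor; auto].
    + use_ih H0.
      * exists (App u1 u2); split; [left; auto| constructor; auto].
      * exists (App u1 u'); split; [right; constructor; auto| constructor; auto].
  - inversion H0; subst. use_ih H.
    + exists (TLam u); split; [left; auto| constructor; auto].
    + exists (TLam u'); split; [right; constructor; auto| constructor; auto].
  - rename r0 into HR1.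
    inversion H0; subst.
    + inversion HR1; subst.
      * exists (tinst Y u0). split; [right; constructor|].
        apply (proj1 (RXN_tren B0)) with (sh r); auto.
      * match goal with Hx : XF _ _ _ _ (TLam _) |- _ => inversion Hx; subst end.
        { match goal with Hx : N _ _ _ _ (TLam _) |- _ => inversion Hx end. }
        exists (TApp u Y). split; [left; auto|]. apply R_x.
        match goal with Hx : XF _ _ (sh _) _ _ |- _ =>
          pose proof ((proj1 (proj2 (RXN_tren B0))) _ _ _ _ Hx (scons Y (fun n => n)) r) as Hy end.
        simpl in Hy. rewrite tren_comp, tren_id in Hy. apply Hy. intros; reflexivity.
    + use_ih H.
      * exists (TApp u Y); split; [left; auto| constructor; auto].
      * exists (TApp u' Y); split; [right; constructor; auto| constructor; auto].
  - destruct (H _ H0) as [u' [Ho Hr]]. exists u'; split; auto. apply R_x; auto.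
  - destruct (H _ H0) as [u' [Ho Hr]]. exists u'; split; auto. apply XF_neu; auto.
  -
    assert (Hsp : spine p).
    { pose proof (XF_spine _ _ _ _ _ x) as Hs. inversion Hs; subst. eapply spine_vren_inv; eauto. }
    inversion H0; subst. use_ihq H.
    + exists p; split; [left; auto| apply XF_lam; auto].
    + inversion Hs; subst.
      * destruct p; simpl in *; try discriminate. inversion Hsp.
      * match goal with Hx : step (vren _ _) _ |- _ => destruct (step_vren_inv _ _ _ Hx) as [p' [-> Hp]] end.
        exists p'; split; [right; auto| apply XF_lam; auto].
      * match goal with Hx : step (Var _) _ |- _ => inversion Hx end.
  -
    assert (Hsp : spine p).
    { pose proof (XF_spine _ _ _ _ _ x) as Hs. inversion Hs; subst. eapply spine_tren_inv; eauto. }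
    inversion H0; subst. use_ihq H.
    + exists p; split; [left; auto| apply XF_tlam; auto].
    + inversion Hs; subst.
      * destruct p; simpl in *; try discriminate. inversion Hsp.
      * match goal with Hx : step (tren _ _) _ |- _ => destruct (step_tren_inv _ _ _ Hx) as [p' [-> Hp]] end.
        exists p'; split; [right; auto| apply XF_tlam; auto].
  - inversion H.
  -
    inversion H1; subst.
    + inversion n0.
    + use_ih H.
      * exists (App p a); split; [left; auto| constructor; auto].
      * exists (App u' a); split; [right; constructor; auto| constructor; auto].
    + use_ih H0.
      * exists (App p a); split; [left; auto| constructor; auto].
      * exists (App p u'); split; [right; constructor; auto| constructor; auto].
  - inversion H0; subst.
    + inversion n0.
    + use_ih H.
      * exists (TApp p Y); split; [left; auto| constructor; auto].
      * exists (TApp u' Y); split; [right; constructor; auto| constructor; auto].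
Qed.

Lemma R_notlam : forall B0 d r u w, R B0 d r u w ->
  (match w with Lam _ => False | _ => True end) -> (match u with Lam _ => False | _ => True end).
Proof.
  intros B0 d r u w H Hw. inversion H; subst; simpl in *; auto.
  pose proof (XF_spine _ _ _ _ _ H0) as Hs. inversion Hs; auto.
Qed.

Lemma R_nottlam : forall B0 d r u w, R B0 d r u w ->
  (match w with TLam _ => False | _ => True end) -> (match u with TLam _ => False | _ => True end).
Proof.
  intros B0 d r u w H Hw. inversion H; subst; simpl in *; auto.
  pose proof (XF_spine _ _ _ _ _ H0) as Hs. inversion Hs; auto.
Qed.

Lemma RXN_normal : forall B0,
  (forall d r u w, R B0 d r u w -> normal w -> normal u) /\
  (forall d r u w, XF B0 d r u w -> normal w -> normal u) /\
  (forall d r u w, N B0 d r u w -> normal w -> normal u).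
Proof.
  intros B0. apply RXN_mut; intros; simpl in *; auto.
  - destruct H1 as [H2 [H3 H4]]. split; [eapply R_notlam; eauto|]. auto.
  - destruct H0 as [H2 H3]. split; [eapply R_nottlam; eauto|]. auto.
  - specialize (H H0). simpl in H. destruct H as [_ [H _]]. apply normal_vren in H. auto.
  - specialize (H H0). simpl in H. destruct H as [_ H]. apply normal_tren in H. auto.
  - destruct H1 as [_ [H2 H3]]. split; auto.
    pose proof (N_spine _ _ _ _ _ n0) as Hs. inversion Hs; auto.
  - destruct H0 as [_ H2]. split; auto.
    pose proof (N_spine _ _ _ _ _ n0) as Hs. inversion Hs; auto.
Qed.

Lemma RXN_typed : forall B0,
  (forall d r u w, R B0 d r u w -> forall D T, length D = d -> typed D w T ->
      typed (D ++ [fren r B0]) u T) /\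
  (forall d r u w, XF B0 d r u w -> forall D T, length D = d -> typed D w T ->
      typed (D ++ [fren r B0]) u T) /\
  (forall d r u w, N B0 d r u w -> forall D T, length D = d -> typed D w T ->
      typed (D ++ [fren r B0]) u T).
Proof.
  intros B0. apply RXN_mut; intros.
  - inversion H0; subst. constructor. rewrite nth_error_app1; auto.
  - inversion H0; subst. constructor.
  - inversion H1; subst. constructor. apply (H (A :: D)); simpl; auto.
  - inversion H2; subst. econstructor; eauto.
  - inversion H1; subst. constructor. rewrite map_app. simpl. rewrite fren_comp.
    apply H; auto. rewrite length_map; auto.
  - inversion H1; subst. constructor. eauto.
  - eauto.
  - eauto.
  - inversion H1; subst. apply typed_app_shift_inv. apply (H (A :: D)); simpl; auto.
  - inversion H1; subst. apply typed_tapp_shift_inv.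
    + pose proof (XF_spine _ _ _ _ _ x) as Hs. inversion Hs; subst. eapply spine_tren_inv; eauto.
    + rewrite map_app. simpl. rewrite fren_comp. apply H; auto. rewrite length_map; auto.
  - inversion H0; subst. constructor. rewrite nth_error_app2; auto. rewrite Nat.sub_diag. reflexivity.
  - inversion H2; subst. econstructor; eauto.
  - inversion H1; subst. constructor. eauto.
Qed.

Lemma R_red_sim : forall B0 w w', red w w' -> forall u, R B0 0 (fun n => n) u w ->
  exists u', red u u' /\ R B0 0 (fun n => n) u' w'.
Proof.
  induction 1; intros u0 Hr.
  - exists u0; split; [constructor|auto].
  - destruct (proj1 (RXN_sim B0) _ _ _ _ Hr _ H) as [u1 [Ho Hr1]].
    destruct (IHred _ Hr1) as [u2 [Hu2 Hr2]]. exists u2; split; auto.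
    destruct Ho as [->|Hs]; auto. econstructor; eauto.
Qed.

Fixpoint fb (A : form) : nat :=
  match A with FVar n => S n | Imp A B => max (fb A) (fb B) | All A => pred (fb A) end.

Fixpoint tb (t : term) : nat :=
  match t with
  | Var _ => 0
  | Cst A => fb A
  | Lam t => tb t
  | App t s => max (tb t) (tb s)
  | TLam t => pred (tb t)
  | TApp t Y => max (tb t) (S Y)
  end.

Lemma fren_ext_b : forall A f g, (forall n, n < fb A -> f n = g n) -> fren f A = fren g A.
Proof.
  induction A as [x|A1 IH1 A2 IH2|A IH]; intros f g H; simpl in *; f_equal.
  - apply H; lia.
  - apply IH1; intros; apply H; lia.
  - apply IH2; intros; apply H; lia.
  - apply IH. intros [|n] Hn; simpl; auto. f_equal. apply H. lia.
Qed.

Lemma tren_ext_b : forall t f g, (forall n, n < tb t -> f n = g n) -> tren f t = tren g t.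
Proof.
  induction t as [n0|C|t IH|t1 IH1 t2 IH2|t IH|t IH Y]; intros f g H; simpl in *; f_equal.
  - apply fren_ext_b; auto.
  - apply IH; auto.
  - apply IH1; intros; apply H; lia.
  - apply IH2; intros; apply H; lia.
  - apply IH. intros [|n] Hn; simpl; auto. f_equal. apply H. lia.
  - apply IH; intros; apply H; lia.
  - apply H; lia.
Qed.

Fixpoint mx (r : nat -> nat) (k : nat) : nat :=
  match k with 0 => 0 | S k => max (mx r k) (r k) end.

Lemma mx_ge : forall r k m, m < k -> r m <= mx r k.
Proof.
  induction k; intros m Hm; simpl; [lia|].
  destruct (Nat.eq_dec m k) as [->|Hne]; [lia|]. specialize (IHk m ltac:(lia)). lia.
Qed.

Definition notabs (n : term) : Prop := match n with Lam _ => False | TLam _ => False | _ => True end.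

Definition Reflect (E : form) : Prop := forall r n, closed n -> normal n -> notabs n ->
  typed [] n (fren r E) -> qIv E r (eta E n).
Definition Reify (E : form) : Prop := forall r t, closed t -> qIv E r t ->
  exists s, red t s /\ normal s /\ typed [] s (fren r E).

Lemma RR : forall E, Reflect E /\ Reify E.
Proof.
  induction E as [x|B [RflB RfyB] C [RflC RfyC]|B [RflB RfyB]]; split.
  - intros r n Hc Hn Ha Ht. simpl. exists n; split; [constructor|auto].
  - intros r t Hc H. simpl in H. exact H.
  -
    intros r n Hc Hn Ha Ht. simpl. eexists; split; [constructor|].
    intros s Hsc Hs. unfold subst1. rewrite subst_eta. simpl.
    rewrite subst_scons_vren.
    destruct (RfyB r s Hsc Hs) as [s' [Hr [Hn' Ht']]].
    apply qIv_red_back with (eta C (App n s')).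
    + apply red_eta, red_appr, Hr.
    + apply RflC.
      * split; auto. eapply red_vars_below; eauto.
      * simpl. split; [destruct n; simpl in *; tauto|]. split; auto.
      * exact I.
      * econstructor; eauto.
  -
    intros r t Hc [u [Hr Hu]].
    assert (Hcu : vars_below 1 u).
    { pose proof (red_vars_below _ _ Hr 0 Hc) as Hx. exact Hx. }
    set (M := eta B (Cst (fren r B))).
    assert (HMc : closed M) by (apply vars_below_eta; exact I).
    assert (HM : qIv B r M).
    { apply RflB; simpl; auto; try constructor. }
    specialize (Hu M HMc HM).
    destruct (RfyC r (subst1 M u)) as [w [Hw [Hnw Htw]]]; auto.
    { unfold closed, subst1. apply vars_below_subst with 1; auto.
      intros [|n] Hn; simpl; [exact HMc|lia]. }
    assert (HR : R (fren r B) 0 (fun n => n) u (subst1 M u)).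
    { apply R_init with B; auto. intros; lia. simpl. unfold M. rewrite fren_id. reflexivity. }
    destruct (R_red_sim _ _ _ Hw _ HR) as [u' [Hu' HR']].
    exists (Lam u'). split; [eapply red_trans; [exact Hr| apply red_lam; exact Hu']|].
    split; [simpl; eapply (proj1 (RXN_normal _)); eauto|].
    simpl. constructor.
    pose proof (proj1 (RXN_typed _) _ _ _ _ HR' [] _ eq_refl Htw) as Hty.
    simpl in Hty. rewrite fren_id in Hty. exact Hty.
  -
    intros r n Hc Hn Ha Ht. simpl. eexists; split; [constructor|].
    intros Y. unfold tinst. rewrite tren_eta. simpl. rewrite tren_comp, tren_id.
    apply RflB.
    + exact Hc.
    + simpl. split; auto. destruct n; simpl in *; tauto.
    + exact I.
    + simpl in Ht. replace (fren (scons Y r) B) with (finst Y (fren (upr r) B)).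
      * constructor; auto.
      * unfold finst. rewrite fren_comp. apply fren_ext. intros [|m]; reflexivity.
  -
    intros r t Hc [u [Hr Hu]].
    assert (Hcu : closed u).
    { pose proof (red_vars_below _ _ Hr 0 Hc) as Hx. exact Hx. }
    set (Y := S (tb u + mx r (fb B))).
    set (g := fun n => if Nat.eqb n Y then 0 else S n).
    destruct (RfyB (scons Y r) (tinst Y u)) as [w [Hw [Hnw Htw]]]; auto.
    { unfold closed, tinst. apply vars_below_tren. exact Hcu. }
    exists (TLam (tren g w)). split; [|split].
    + eapply red_trans; [exact Hr|]. apply red_tlam.
      replace u with (tren g (tinst Y u)) at 1; [apply red_tren; exact Hw|].
      unfold tinst. rewrite tren_comp. rewrite <- (tren_id u) at 2. apply tren_ext_b.
      intros [|m] Hm; simpl; unfold g.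
      * rewrite Nat.eqb_refl. reflexivity.
      * destruct (Nat.eqb_spec m Y); [unfold Y in *; lia|reflexivity].
    + simpl. apply normal_tren. exact Hnw.
    + simpl. constructor. simpl.
      pose proof (typed_tren _ _ _ Htw g) as Ht2. simpl in Ht2.
      rewrite fren_comp in Ht2. erewrite fren_ext_b; [exact Ht2|].
      intros [|m] Hm; simpl; unfold g.
      * rewrite Nat.eqb_refl. reflexivity.
      * assert (r m <= mx r (fb B)) by (apply mx_ge; lia).
        destruct (Nat.eqb_spec (r m) Y); [unfold Y in *; lia|reflexivity].
Qed.

Lemma main_gen : forall G t A, vars_below (length G) t -> qIvalid_ctx G t A ->
  exists s, normal s /\ red t s /\ typed G s A.
Proof.
  induction G as [|A0 G IH]; intros t A Hv H.
  - specialize (H [] (Forall2_nil _)). unfold qIvalid in H.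
    rewrite (subst_ext t _ Var) in H by (intros [|n]; reflexivity).
    rewrite subst_var in H.
    destruct (proj2 (RR A) (fun n => n) t Hv H) as [s [Hr [Hn Ht]]].
    rewrite fren_id in Ht. exists s; auto.
  - destruct (IH (Lam t) (Imp A0 A)) as [s [Hn [Hr Ht]]].
    + exact Hv.
    + intros ts Hts. unfold qIvalid. simpl. eexists; split; [constructor|].
      intros s Hsc Hs. unfold subst1. rewrite subst_subst.
      assert (Hl : length ts = length G) by (eapply Forall2_length; eauto).
      specialize (H (s :: ts) (Forall2_cons _ _ (conj Hsc Hs) Hts)).
      erewrite subst_ext_vars; [exact H|exact Hv|].
      intros [|n] Hn; simpl; auto.
      rewrite subst_scons_vren. apply nth_indep. simpl in Hn. lia.
    + destruct (red_lam_inv _ _ Hr) as [s' [-> Hr']].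
      inversion Ht; subst. exists s'; auto.
Qed.

Theorem mainTheorem2 (base : nat -> Prop) (G : list form) (t : term) (A : form) :
  vars_below (length G) t ->
  Ivalid base G t A ->
  exists s, normal s /\ proof_term base s /\ red t s /\ typed G s A.
Proof.
  intros Hv [Hpt Hq].
  destruct (main_gen G t A Hv Hq) as [s [Hn [Hr Ht]]].
  exists s; repeat split; auto.
  unfold proof_term in *. eapply red_pt; eauto.
Qed.
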